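(* Let $q$ be a prime power and let $l_1,l_2$ be distinct odd primes, each coprime to $q$. If every irreducible monic factor of $x^{l_1}-1$ and of $x^{l_2}-1$ in $\mathbb{F}_{q^2}[x]$ is SCRIM and $\gcd(\mathrm{ord}_{l_1}(q^2),\mathrm{ord}_{l_2}(q^2))=1$, then $|\Omega_{q^2,l_1l_2}|=|\Omega_{q^2,l_1}|\,|\Omega_{q^2,l_2}|$.
   Context: $\mathbb{F}_{q^2}$ is the finite field with $q^2$ elements. For $\alpha\in\mathbb{F}_{q^2}$ put $\bar\alpha=\alpha^q$, and for $f(x)=\sum_i f_ix^i$ put $\overline{f(x)}=\sum_i \bar f_i x^i$. For $f(x)$ with $f(0)\neq 0$, $f^*(x)=x^{\deg f}f(0)^{-1}f(1/x)$ and $f^\dagger(x)=\overline{f^*(x)}$. A polynomial is SCRIM if it is monic, irreducible over $\mathbb{F}_{q^2}$, has nonzero constant term, and satisfies $f=f^\dagger$. $\Omega_{q^2,n}$ denotes the set of SCRIM polynomials in $\mathbb{F}_{q^2}[x]$ dividing $x^n-1$. $\mathrm{ord}_l(a)$ is the multiplicative order of $a$ modulo $l$. *)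

(* Defs.v *)
From HB Require Import structures.
From mathcomp Require Import all_boot all_order all_algebra all_field.
From mathcomp Require Import boolp.
Set Implicit Arguments. Unset Strict Implicit. Unset Printing Implicit Defensive.
Import GRing.Theory.
Local Open Scope ring_scope.

(* F is meant to be the field with q^2 elements; bar a = a^q. *)
Definition fbar (F : finFieldType) (q : nat) (a : F) : F := a ^+ q.

Definition pbar (F : finFieldType) (q : nat) (f : {poly F}) : {poly F} :=
  map_poly (fbar q) f.

(* f^star(x) = x^{deg f} f(0)^{-1} f(1/x): reversed coefficient list scaled by f(0)^{-1} *)
Definition pstar (F : finFieldType) (f : {poly F}) : {poly F} :=
  (f`_0)^-1 *: Poly (rev f).

Definition pdagger (F : finFieldType) (q : nat) (f : {poly F}) : {poly F} :=
  pbar q (pstar f).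

Definition SCRIM (F : finFieldType) (q : nat) (f : {poly F}) : Prop :=
  [/\ f \is monic, irreducible_poly f, f`_0 != 0 & f = pdagger q f].

(* Omega_{q^2,n}: the (duplicate-free) list of SCRIM polynomials dividing x^n - 1.
   For n >= 1 every divisor of x^n-1 has size <= n+1, so it is Poly of some
   (n+1)-tuple; the classical boolean reflection `[< _ >] is used to filter. *)
Definition Omega (F : finFieldType) (q n : nat) : seq {poly F} :=
  [seq f <- undup [seq Poly (tval t) | t : (n.+1).-tuple F]
     | `[< SCRIM q f /\ f %| 'X^n - 1 >] ].

(* ord_l(a): least k >= 1 with a^k = 1 mod l (searched in 1..l; correct when
   l > 1 and coprime a l, since then ord_l(a) <= l - 1). *)
Definition ordmod (l a : nat) : nat :=
  (find (fun k => a ^ k.+1 == 1 %[mod l]) (iota 0 l)).+1.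

(* Main.v *)
From HB Require Import structures.
Require Import Defs.
From mathcomp Require Import all_boot all_order all_algebra all_field.
Set Implicit Arguments. Unset Strict Implicit. Unset Printing Implicit Defensive.
Import GRing.Theory.
Local Open Scope ring_scope.

Definition pw (K : fieldType) (e : nat) (He : [pchar K].-nat e) (x : K) := x ^+ e.
Lemma pw_nmod (K : fieldType) (e : nat) (He : [pchar K].-nat e) : nmod_morphism (pw He).
Proof.
split; rewrite /pw; last by move=> x y; rewrite exprDn_pchar.
by rewrite expr0n; case: e He => //.
Qed.
Lemma pw_mon (K : fieldType) (e : nat) (He : [pchar K].-nat e) : monoid_morphism (pw He).
Proof. by split; rewrite /pw ?expr1n // => x y; rewrite exprMn. Qed.
HB.instance Definition _ (K : fieldType) (e : nat) (He : [pchar K].-nat e) := GRing.isNmodMorphism.Build K K (pw He) (pw_nmod He).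
HB.instance Definition _ (K : fieldType) (e : nat) (He : [pchar K].-nat e) := GRing.isMonoidMorphism.Build K K (pw He) (pw_mon He).
From mathcomp Require Import all_solvable.
From mathcomp Require Import boolp.
From Stdlib Require Import Classical.
From mathcomp Require Import zify ring.

Lemma unity1 (K : fieldType) (u : K) a b :
  (0 < a)%N -> u ^+ a = 1 -> u ^+ b = 1 -> coprime a b -> u = 1.
Proof.
move=> a0 ua ub cab; have [t _] := Bezoutl b a0.
rewrite (eqP cab) => /dvdnP[c Hc].
have : u ^+ (1 + t * b) = 1 by rewrite Hc mulnC exprM ua expr1n.
by rewrite exprD expr1 mulnC exprM ub expr1n mulr1.
Qed.

Lemma horner_rev (K : fieldType) (g : {poly K}) (v : K) : v != 0 ->
  (Poly (rev g)).[v] = v ^+ (size g).-1 * g.[v^-1].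
Proof.
move=> v0; set N := size g.
rewrite (horner_coef_wide _ (size_Poly _)) size_rev horner_coef -/N mulr_sumr.
rewrite -(big_mkord xpredT (fun i => (Poly (rev g))`_i * v ^+ i)).
rewrite big_rev_mkord subn0; apply: eq_bigr => k _.
have kN : (k < N)%N := ltn_ord k.
rewrite coef_Poly nth_rev ?size_rev -/N; last by lia.
have -> : (N - (N - k.+1).+1)%N = k by lia.
have -> : N.-1 = (N - k.+1 + k)%N by lia.
have vk : v ^+ k != 0 by rewrite expf_neq0.
by rewrite exprD exprVn; field.
Qed.


Lemma mem_Omega (F : finFieldType) q n (f : {poly F}) : (0 < n)%N ->
  (f \in Omega F q n) <-> (SCRIM q f /\ f %| 'X^n - 1).
Proof.
move=> n0; rewrite /Omega mem_filter mem_undup; split.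
  by case/andP => /asboolP.
move=> [S D]; apply/andP; split; first exact/asboolP.
have sf : (size f <= n.+1)%N.
  rewrite -(size_Xn_sub_1 F n0); apply: dvdp_leq => //.
  by rewrite -size_poly_eq0 size_Xn_sub_1.
apply/mapP; exists (@Tuple n.+1 F (mkseq (fun i => f`_i) n.+1) (introT eqP (size_mkseq _ _))).
  exact: mem_enum.
apply/polyP => j; rewrite coef_Poly /=.
case: (ltnP j n.+1) => hj; first by rewrite nth_mkseq.
by rewrite !nth_default ?size_mkseq // (leq_trans sf hj).
Qed.

Lemma uniq_Omega (F : finFieldType) q n : uniq (Omega F q n).
Proof. by rewrite /Omega filter_uniq ?undup_uniq. Qed.

Section S.
Variables (F : finFieldType) (L : closedFieldType) (io : {rmorphism F -> L}).
Variables (p m : nat).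
Hypotheses (chF : p \in [pchar F]) (cardF : #|F| = (p ^ m)%N).
Local Notation Q := #|F|.
Local Notation "f ^i" := (map_poly io f) (at level 2, format "f ^i").

Lemma chL : p \in [pchar L].
Proof. by rewrite (GRing.fmorph_pchar io). Qed.

Lemma natL e : [pchar L].-nat (p ^ e)%N.
Proof.
by rewrite (eq_pnat _ (pcharf_eq chL)) pnatX pnat_id ?(pcharf_prime chL).
Qed.

Definition frQ : {rmorphism L -> L} := pw (natL m).
Lemma frQE x : frQ x = x ^+ Q. Proof. by rewrite cardF. Qed.

Lemma Qgt1 : (1 < Q)%N. Proof. exact: finNzRing_gt1. Qed.

Lemma map_frQ f : map_poly frQ f^i = f^i.
Proof.
by apply/polyP => j; rewrite !coef_map /= frQE -rmorphXn expf_card.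
Qed.

Lemma root_Q f z : root f^i z -> root f^i (z ^+ Q).
Proof.
move=> /eqP rz; apply/eqP; rewrite -frQE -{1}map_frQ horner_map rz.
exact: rmorph0.
Qed.

Lemma root_Qi f z i : root f^i z -> root f^i (z ^+ (Q ^ i)).
Proof.
move=> rz; elim: i => [|i IH]; first by rewrite expn0 expr1.
by rewrite expnSr exprM; apply: root_Q.
Qed.

Lemma powQi_inj i : injective (fun x : L => x ^+ (Q ^ i)).
Proof.
move=> x y /= E; apply: (fmorph_inj (pw (natL (m * i)))).
by rewrite /= /pw expnM -cardF.
Qed.

Lemma fixed_range w : w ^+ Q = w -> exists c, w = io c.
Proof.
move=> wQ; apply: NNPP => Hn.
pose P : {poly L} := 'X^Q - 'X.
have sP : size P = Q.+1.
  by rewrite /P size_polyDl ?size_polyXn // size_polyN size_polyX ltnS Qgt1.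
have P0 : P != 0 by rewrite -size_poly_eq0 sP.
have := max_poly_roots P0 (rs := w :: map io (enum F)).
rewrite /= sP size_map -cardE ltnn => H; suff : false by []; apply: H.
  apply/andP; split; first by rewrite /root /P !hornerE wQ subrr.
  apply/allP => _ /mapP[c _ ->]; by rewrite /root /P !hornerE -rmorphXn expf_card subrr.
rewrite map_inj_uniq ?enum_uniq ?andbT; last exact: fmorph_inj.
by apply/mapP => -[c _ wc]; apply: Hn; exists c.
Qed.


Lemma share_root f g z : f \is monic -> g \is monic ->
  irreducible_poly f -> irreducible_poly g -> root f^i z -> root g^i z -> f = g.
Proof.
move=> mf mg irf irg rf rg.
have [Hs|Hs] := eqVneq (size (gcdp f g)) 1%N.
  have : root (gcdp f g)^i z by rewrite gcdp_map root_gcd rf rg.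
  have nz : (gcdp f g)^i != 0 by rewrite -size_poly_eq0 size_map_poly Hs.
  by move/(root_size_gt1 nz); rewrite size_map_poly Hs.
have e1 := irf.2 _ Hs (dvdp_gcdl f g).
have e2 := irg.2 _ Hs (dvdp_gcdr f g).
apply/eqP; rewrite -eqp_monic //.
by rewrite eqp_sym in e1; exact: eqp_trans e1 e2.
Qed.

Lemma exists_irr P z : P != 0 -> root P^i z ->
  exists f, [/\ f \is monic, irreducible_poly f, f %| P & root f^i z].
Proof.
move: {2}(size P) (leqnn (size P)) => n; elim: n P => [|n IH] P.
  by rewrite leqn0 size_poly_eq0 => /eqP -> /eqP.
move=> sP P0 rP.
have s1 : (1 < size P)%N.
  by rewrite -(size_map_poly io); apply: (root_size_gt1 _ rP); rewrite map_poly_eq0.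
have lc0 : lead_coef P != 0 by rewrite lead_coef_eq0.
case: (classic (irreducible_poly P)) => irP.
  exists ((lead_coef P)^-1 *: P); split.
  - by apply/monicP; rewrite lead_coefZ mulVf.
  - split; first by rewrite size_scale ?invr_eq0.
    move=> q sq; rewrite dvdpZr ?invr_eq0 // => qP.
    apply: eqp_trans (irP.2 q sq qP) _; by rewrite eqp_sym eqp_scale // invr_eq0.
  - by rewrite dvdpZl ?invr_eq0.
  - by rewrite map_polyZ rootZ // fmorph_eq0 invr_eq0.
have [q [sq qP nqP]] : exists q : {poly F}, [/\ size q != 1%N, q %| P & ~~ (q %= P)].
  apply: NNPP => H; apply: irP; split => // q sq qP.
  by apply: NNPP => /negP nq; apply: H; exists q.
have q0 : q != 0 by apply: contraTneq qP => ->; rewrite dvd0p.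
set r := P %/ q.
have Pr : P = r * q by rewrite divpK.
have r0 : r != 0 by apply: contraNneq P0 => r0; rewrite Pr r0 mul0r.
have sqP : (size q < size P)%N.
  rewrite ltn_neqAle dvdp_leq // andbT; apply: contra nqP.
  by rewrite dvdp_size_eqp.
have sq2 : (1 < size q)%N.
  by rewrite ltn_neqAle eq_sym sq /= lt0n size_poly_eq0.
have srP : (size r < size P)%N.
  rewrite Pr size_mul //; move: sq2; case: (size q) => // k.
  by case: k => // k _; rewrite addnS /= -[X in (X < _)%N]addn0 ltn_add2l.
move: rP; rewrite Pr rmorphM rootM => /orP[rr|rq].
  have [f [mf irf fr rf]] := IH r (leq_trans srP sP) r0 rr.
  exists f; split => //; apply: dvdp_trans fr _; by apply/dvdpP; exists q; rewrite mulrC.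
have [f [mf irf fr rf]] := IH q (leq_trans sqP sP) q0 rq.
exists f; split => //; apply: dvdp_trans fr _; by apply/dvdpP; exists r.
Qed.


Lemma per_mod (y : L) e b a : y ^+ (Q ^ e) = y -> y ^+ (Q ^ (e * b + a)) = y ^+ (Q ^ a).
Proof.
move=> ye; elim: b => [|b IH]; first by rewrite muln0.
by rewrite mulnS -addnA expnD exprM ye IH.
Qed.

Lemma per_tot (z : L) n : (0 < n)%N -> z ^+ n = 1 -> coprime Q n -> z ^+ (Q ^ totient n) = z.
Proof.
move=> n0 zn cQn.
by rewrite -(expr_mod _ zn) (Euler_exp_totient cQn) (expr_mod _ zn) expr1.
Qed.

Lemma orbit f z n : f \is monic -> irreducible_poly f -> root f^i z ->
  (0 < n)%N -> z ^+ n = 1 -> coprime Q n ->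
  exists rs : seq L, [/\ uniq rs, f^i = \prod_(w <- rs) ('X - w%:P) &
     forall w, w \in rs -> exists i, w = z ^+ (Q ^ i)].
Proof.
move=> mf irf rz n0 zn cQn.
pose P d := (0 < d)%N && (z ^+ (Q ^ d) == z).
have exP : exists d, P d.
  by exists (totient n); rewrite /P totient_gt0 n0 per_tot ?eqxx.
case: (ex_minnP exP) => d /andP[d0 /eqP zd] dmin.
pose rs := [seq z ^+ (Q ^ i) | i <- iota 0 d].
have rsP i : z ^+ (Q ^ i) \in rs.
  apply/mapP; exists (i %% d)%N; first by rewrite mem_iota ltn_mod d0.
  by rewrite {1}(divn_eq i d) mulnC per_mod.
have rsE w : w \in rs -> exists i, w = z ^+ (Q ^ i).
  by case/mapP => i _ ->; exists i.
have Urs : uniq rs.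
  rewrite map_inj_in_uniq ?iota_uniq // => i j; rewrite !mem_iota !add0n /=.
  move=> id jd.
  wlog lij : i j id jd / (i <= j)%N.
    move=> H E; case: (leqP i j) => [lij|/ltnW lji]; first exact: H.
    by apply/esym/H.
  move=> E; apply/eqP; rewrite eqn_leq lij /=; apply: contraT; rewrite -ltnNge => ltij.
  have E' : (z ^+ (Q ^ (j - i))) ^+ (Q ^ i) = z ^+ (Q ^ i).
    by rewrite -exprM -expnD subnK.
  have := dmin (j - i)%N; rewrite /P subn_gt0 ltij (powQi_inj E') eqxx => /(_ isT).
  by rewrite leqNgt (leq_ltn_trans (leq_subr i j) jd).
pose g := \prod_(w <- rs) ('X - w%:P).
have gQ : map_poly frQ g = g.
  rewrite rmorph_prod /=.
  under eq_bigr do rewrite map_polyXsubC.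
  rewrite -(big_map frQ xpredT (fun w => 'X - w%:P)).
  apply: perm_big; apply: uniq_perm.
  - by rewrite map_inj_uniq //; exact: fmorph_inj.
  - exact: Urs.
  move=> w; apply/mapP/idP => [[v /rsE[i ->] ->]|/rsE[i ->]].
    by rewrite frQE -exprM -expnSr.
  exists (z ^+ (Q ^ (d.-1 + i))); first exact: rsP.
  by rewrite frQE -exprM -expnSr -addSn prednK // -(muln1 d) per_mod.
have gcoef j : exists c, g`_j = io c.
  by apply: fixed_range; rewrite -frQE -coef_map gQ.
pose pre (w : L) := odflt 0 [pick c : F | io c == w].
have preE j : io (pre g`_j) = g`_j.
  have [c ->] := gcoef j; rewrite /pre.
  by case: pickP => [c0 /eqP //| H]; have := H c; rewrite eqxx.
pose k := \poly_(j < size g) pre g`_j.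
have kg : k^i = g.
  apply/polyP => j; rewrite coef_map coef_poly.
  by case: ltnP => hj; [exact: preE | rewrite nth_default //; exact: rmorph0].
have gf : g %| f^i.
  have [r ->] : exists r, f^i = r * g.
    apply: uniq_roots_prod_XsubC; last by rewrite uniq_rootsE.
    by apply/allP => w /rsE[i ->]; apply: root_Qi.
  exact: dvdp_mulIr.
have kf : k %| f by rewrite -(dvdp_map io) kg.
have sk : size k = d.+1 by rewrite -(size_map_poly io) kg size_prod_XsubC size_map size_iota.
have mk : k \is monic by rewrite -(map_monic io) kg monic_prod_XsubC.
have ekf : k %= f by apply: irf.2 => //; rewrite sk; case: (d) d0.
have : k = f by apply/eqP; rewrite -eqp_monic.
by move=> ekf'; exists rs; split => //; rewrite -ekf' kg.
Qed.


Variable k : nat.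
Hypothesis mk : m = (k * 2)%N.
Local Notation q := (p ^ k)%N.

Lemma natF : [pchar F].-nat q.
Proof.
by rewrite (eq_pnat _ (pcharf_eq chF)) pnatX pnat_id ?(pcharf_prime chF).
Qed.

Definition frq : {rmorphism L -> L} := pw (natL k).
Definition psi (x : L) := (x^-1) ^+ q.

Lemma psiM x y : psi (x * y) = psi x * psi y.
Proof. by rewrite /psi invfM exprMn. Qed.

Lemma psi_psi x : psi (psi x) = x ^+ Q.
Proof.
by rewrite /psi !exprVn invrK -exprM cardF mk expnM expnS expn1.
Qed.

Lemma psi_neq0 x : x != 0 -> psi x != 0.
Proof. by move=> x0; rewrite /psi expf_neq0 // invr_eq0. Qed.

Lemma map_Poly_rev (f : {poly F}) : (Poly (rev f))^i = Poly (rev f^i).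
Proof.
apply/polyP => j; rewrite coef_map !coef_Poly.
case: (ltnP j (size f)) => hj.
  have h2 : (j < size f^i)%N by rewrite size_map_poly.
  by rewrite (nth_rev _ hj) (nth_rev _ h2) size_map_poly -coef_map.
rewrite !nth_default ?size_rev ?size_map_poly //; exact: rmorph0.
Qed.

Lemma pdagger_map (f : {poly F}) : (pdagger q f)^i = map_poly frq ((pstar f)^i).
Proof.
apply/polyP => j; rewrite /pdagger /pbar coef_map coef_map_id0; last first.
  by rewrite /fbar expr0n expn_eq0 (gtn_eqF (prime_gt0 (pcharf_prime chF))).
by rewrite !coef_map /= /fbar /pw rmorphXn.
Qed.

Lemma root_dagger (f : {poly F}) x : x != 0 -> root f^i x -> root (pdagger q f)^i (psi x).
Proof.
move=> x0 /eqP rx; apply/eqP; rewrite pdagger_map /psi.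
have -> : (x^-1) ^+ q = frq (x^-1) by [].
rewrite horner_map /pstar map_polyZ hornerZ map_Poly_rev horner_rev ?invr_eq0 //.
by rewrite invrK rx !mulr0 rmorph0.
Qed.

Lemma dagger_monic (f : {poly F}) : f \is monic -> f`_0 != 0 ->
  pdagger q f \is monic /\ size (pdagger q f) = size f.
Proof.
move=> mf f0.
have PK : Poly (rev f) = rev f :> seq F.
  apply: (@PolyK _ 0); move: f0; rewrite -[f`_0]/(nth 0 (polyseq f) 0).
  by case: (polyseq f) => [|x s] //=; rewrite ?eqxx // rev_cons last_rcons.
have -> : pdagger q f = map_poly (pw natF) (pstar f) by [].
rewrite size_map_poly map_monic /pstar size_scale ?invr_eq0 // PK size_rev.
split => //; apply/monicP; rewrite lead_coefZ lead_coefE PK size_rev.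
have sf : (0 < size f)%N by rewrite size_poly_gt0 monic_neq0.
rewrite nth_rev ?prednK // subnn mulVf //.
Qed.


Lemma orbit_mem f z n w : f \is monic -> irreducible_poly f -> root f^i z ->
  (0 < n)%N -> z ^+ n = 1 -> coprime Q n -> root f^i w -> exists i, w = z ^+ (Q ^ i).
Proof.
move=> mf irf rz n0 zn cQn rw.
have [rs [_ fE rsE]] := orbit mf irf rz n0 zn cQn.
by apply: rsE; move: rw; rewrite fE root_prod_XsubC.
Qed.

Lemma map_Xn1 n : ('X^n - 1 : {poly F})^i = 'X^n - 1.
Proof. by rewrite rmorphB /= map_polyXn rmorph1. Qed.

Lemma rootXn (f : {poly F}) n z : f %| 'X^n - 1 -> root f^i z -> z ^+ n = 1.
Proof.
move=> D rz; have D' : f^i %| 'X^n - 1 by rewrite -map_Xn1 dvdp_map.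
by have := root_dvdp D' rz; rewrite rootE !hornerE subr_eq0 => /eqP.
Qed.

Lemma irr_root l z : (0 < l)%N -> z ^+ l = 1 ->
  exists f, [/\ f \is monic, irreducible_poly f, f %| 'X^l - 1 & root f^i z].
Proof.
move=> l0 zl; apply: exists_irr.
  by rewrite -size_poly_eq0 size_Xn_sub_1.
by rewrite map_Xn1 rootE !hornerE zl subrr.
Qed.

Lemma unity_neq0 (x : L) l : (0 < l)%N -> x ^+ l = 1 -> x != 0.
Proof. by move=> l0 xl; apply: contra_eq_neq xl => ->; rewrite expr0n gtn_eqF // eq_sym oner_eq0. Qed.

Lemma ordmod_spec l : prime l -> coprime Q l -> Q ^ (ordmod l Q) = 1 %[mod l].
Proof.
move=> pl cl; have l1 := prime_gt1 pl.
have hs : has (fun k => Q ^ k.+1 == 1 %[mod l]) (iota 0 l).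
  apply/hasP; exists l.-2; first by rewrite mem_iota /=; lia.
  have -> : l.-2.+1 = totient l by rewrite totient_prime //; lia.
  by apply/eqP; apply: Euler_exp_totient.
have := nth_find 0 hs; rewrite nth_iota ?add0n; first by move/eqP.
by move: hs; rewrite has_find size_iota.
Qed.

Lemma unity_ord (x : L) l : prime l -> coprime Q l -> x ^+ l = 1 ->
  x ^+ (Q ^ ordmod l Q) = x.
Proof.
move=> pl cl xl.
by rewrite -(expr_mod _ xl) (ordmod_spec pl cl) (expr_mod _ xl) expr1.
Qed.

Lemma per_modE (x : L) e i : (0 < e)%N -> x ^+ (Q ^ e) = x -> x ^+ (Q ^ i) = x ^+ (Q ^ (i %% e)).
Proof. by move=> e0 xe; rewrite {1}(divn_eq i e) mulnC per_mod. Qed.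

Variables (l1 l2 : nat).
Hypotheses (pl1 : prime l1) (pl2 : prime l2) (cl12 : coprime l1 l2).
Hypotheses (cQ1 : coprime Q l1) (cQ2 : coprime Q l2).
Hypothesis (co : coprime (ordmod l1 Q) (ordmod l2 Q)).
Hypothesis H1 : forall f : {poly F}, f \is monic -> irreducible_poly f ->
      f %| 'X^l1 - 1 -> SCRIM q f.
Hypothesis H2 : forall f : {poly F}, f \is monic -> irreducible_poly f ->
      f %| 'X^l2 - 1 -> SCRIM q f.
Local Notation N := (l1 * l2)%N.

Lemma N0 : (0 < N)%N. Proof. by rewrite muln_gt0 !prime_gt0. Qed.
Lemma cQN : coprime Q N. Proof. by rewrite coprimeMr cQ1 cQ2. Qed.

Lemma crt_frob (x y : L) i j : x ^+ l1 = 1 -> y ^+ l2 = 1 ->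
  exists k, x ^+ (Q ^ k) = x ^+ (Q ^ i) /\ y ^+ (Q ^ k) = y ^+ (Q ^ j).
Proof.
move=> xl yl; set o1 := ordmod l1 Q; set o2 := ordmod l2 Q.
have x1 := unity_ord pl1 cQ1 xl; have y1 := unity_ord pl2 cQ2 yl.
exists (chinese o1 o2 i j); split.
  by rewrite (per_modE _ _ x1) // [RHS](per_modE _ _ x1) // chinese_modl.
by rewrite (per_modE _ _ y1) // [RHS](per_modE _ _ y1) // chinese_modr.
Qed.

Lemma decomp (z : L) : z ^+ N = 1 -> exists x y, [/\ x ^+ l1 = 1, y ^+ l2 = 1 & z = x * y].
Proof.
move=> zN; set c1 := chinese l1 l2 1 0; set c2 := chinese l1 l2 0 1.
exists (z ^+ c1), (z ^+ c2); split.
- have : (N %| c1 * l1)%N.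
    rewrite mulnC dvdn_mul // /dvdn.
    by rewrite (chinese_modr cl12 1 0) mod0n.
  by case/dvdnP => t Ht; rewrite -exprM Ht [(t * _)%N]mulnC exprM zN expr1n.
- have : (N %| c2 * l2)%N.
    rewrite [(c2 * l2)%N]mulnC [N]mulnC dvdn_mul // /dvdn.
    by rewrite (chinese_modl cl12 0 1) mod0n.
  by case/dvdnP => t Ht; rewrite -exprM Ht [(t * _)%N]mulnC exprM zN expr1n.
rewrite -exprD -(expr_mod _ zN).
have : c1 + c2 = 1 %[mod N].
  apply/eqP; rewrite chinese_remainder //; apply/andP; split; apply/eqP.
    by rewrite -modnDm (chinese_modl cl12 1 0) (chinese_modl cl12 0 1) mod0n addn0 modn_mod.
  by rewrite -modnDm (chinese_modr cl12 1 0) (chinese_modr cl12 0 1) mod0n add0n modn_mod.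
by move=> ->; rewrite (expr_mod _ zN) expr1.
Qed.

Lemma psi_orb l (x : L) : prime l -> coprime Q l ->
  (forall f : {poly F}, f \is monic -> irreducible_poly f -> f %| 'X^l - 1 -> SCRIM q f) ->
  x ^+ l = 1 -> exists i, psi x = x ^+ (Q ^ i).
Proof.
move=> pl cl Hs xl.
have [f [mf irf fd rf]] := irr_root (prime_gt0 pl) xl.
have [_ _ f0 fE] := Hs f mf irf fd.
have x0 := unity_neq0 (prime_gt0 pl) xl.
have := root_dagger x0 rf; rewrite -fE => rpsi.
exact: orbit_mem mf irf rf (prime_gt0 pl) xl cl rpsi.
Qed.

Lemma psi_orbN (z : L) : z ^+ N = 1 -> exists k, psi z = z ^+ (Q ^ k).
Proof.
move=> zN; have [x [y [xl yl ->]]] := decomp zN; rewrite psiM.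
have [i ->] := psi_orb pl1 cQ1 H1 xl.
have [j ->] := psi_orb pl2 cQ2 H2 yl.
have [k0 [xk yk]] := crt_frob i j xl yl.
by exists k0; rewrite exprMn xk yk.
Qed.


Lemma allSCRIM (h : {poly F}) : h \is monic -> irreducible_poly h -> h %| 'X^N - 1 -> SCRIM q h.
Proof.
move=> mh irh hd.
have h0 : h`_0 != 0.
  rewrite -horner_coef0; apply/negP => /eqP h0.
  have := root_dvdp hd (x := 0); rewrite /root h0 eqxx => /(_ isT).
  by rewrite !hornerE expr0n (gtn_eqF N0) sub0r oppr_eq0 oner_eq0.
have [z rz] : exists z, root h^i z.
  by apply/closed_rootP; rewrite size_map_poly neq_ltn irh.1 orbT.
have zN := rootXn hd rz.
have [rs [Urs hE rsE]] := orbit mh irh rz N0 zN cQN.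
have [mD sD] := dagger_monic mh h0.
have dv : h^i %| (pdagger q h)^i.
  rewrite hE; have [r ->] : exists r, (pdagger q h)^i = r * \prod_(w <- rs) ('X - w%:P).
    apply: uniq_roots_prod_XsubC; last by rewrite uniq_rootsE.
    apply/allP => w wrs.
    have rw : root h^i w by rewrite hE root_prod_XsubC.
    set v := w ^+ (Q ^ (totient N).-1).
    have rv : root h^i v := root_Qi _ rw.
    have vN : v ^+ N = 1 := rootXn hd rv.
    have [k0 pk] := psi_orbN vN.
    have rpv : root h^i (psi v) by rewrite pk; apply: root_Qi.
    have pv0 : psi v != 0 := psi_neq0 (unity_neq0 N0 vN).
    have := root_dagger pv0 rpv; rewrite psi_psi /v -exprM -expnSr prednK ?totient_gt0 ?N0 //.
    by rewrite per_tot ?N0 ?cQN // (rootXn hd rw).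
  exact: dvdp_mulIr.
have hD : h %| pdagger q h by rewrite -(dvdp_map io).
have : h %= pdagger q h by rewrite -dvdp_size_eqp // sD.
rewrite eqp_monic // => /eqP hE'.
by split.
Qed.

Lemma ex_rt (P : {poly L}) : exists x, (1 < size P)%N ==> root P x.
Proof.
case: (ltnP 1 (size P)) => h; last by exists 0.
have /closed_rootP [x rx] : size P != 1%N by rewrite neq_ltn h orbT.
by exists x.
Qed.

Definition rt (P : {poly L}) := xchoose (ex_rt P).

Lemma rt_root (P : {poly L}) : (1 < size P)%N -> root P (rt P).
Proof. move=> h; exact: (implyP (xchooseP (ex_rt P)) h). Qed.

Lemma Om_rt l (f : {poly F}) : (0 < l)%N -> f \in Omega F q l ->
  [/\ f \is monic, irreducible_poly f, f %| 'X^l - 1, root f^i (rt f^i) & (rt f^i) ^+ l = 1].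
Proof.
move=> l0 /(mem_Omega _ _ l0) [[mf irf _ _] fd].
have rf : root f^i (rt f^i) by apply: rt_root; rewrite size_map_poly irf.1.
by split => //; apply: rootXn fd rf.
Qed.

Lemma unityN (x y : L) : x ^+ l1 = 1 -> y ^+ l2 = 1 -> (x * y) ^+ N = 1.
Proof.
move=> xl yl; rewrite exprMn exprM xl expr1n mulnC exprM yl expr1n mulr1 //.
Qed.

Lemma count_main :
  size (Omega F q N) = (size (Omega F q l1) * size (Omega F q l2))%N.
Proof.
set O := Omega F q N; set O1 := Omega F q l1; set O2 := Omega F q l2.
have l10 := prime_gt0 pl1; have l20 := prime_gt0 pl2.
pose mN z := nth 0 O (find (fun h => root h^i z) O).
have mNP z : z ^+ N = 1 -> mN z \in O /\ root (mN z)^i z.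
  move=> zN; have hs : has (fun h => root h^i z) O.
    have [h [mh irh hd rh]] := irr_root N0 zN.
    apply/hasP; exists h => //; apply/(mem_Omega _ _ N0); split => //.
    exact: allSCRIM.
  by split; [apply: mem_nth; rewrite -has_find | exact: (nth_find 0 hs)].
have Omi h : h \in O -> h \is monic /\ irreducible_poly h.
  by move=> /(mem_Omega _ _ N0) [[]].
pose H f1 f2 := mN (rt f1^i * rt f2^i).
rewrite -(size_allpairs H).
apply: perm_size; apply: uniq_perm; first exact: uniq_Omega.
  apply: allpairs_uniq; try exact: uniq_Omega.
  move=> [a1 a2] [b1 b2] /allpairsP[[c1 c2] [/= a1O a2O [-> ->]]].
  move=> /allpairsP[[d1 d2] [/= b1O b2O [-> ->]]] /= E.
  have [mf1 irf1 _ rf1 xl] := Om_rt l10 a1O.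
  have [mf2 irf2 _ rf2 yl] := Om_rt l20 a2O.
  have [mg1 irg1 _ rg1 x'l] := Om_rt l10 b1O.
  have [mg2 irg2 _ rg2 y'l] := Om_rt l20 b2O.
  move: E; rewrite /H.
  set x := rt c1^i; set y := rt c2^i; set x' := rt d1^i; set y' := rt d2^i => E.
  have [hO rh1] := mNP _ (unityN xl yl).
  have [_ rh2] := mNP _ (unityN x'l y'l).
  rewrite -E in rh2; have [mh irh] := Omi _ hO.
  have [i Ei] := orbit_mem mh irh rh1 N0 (unityN xl yl) cQN rh2.
  rewrite exprMn in Ei.
  have x0 : x ^+ (Q ^ i) != 0 by rewrite expf_neq0 // (unity_neq0 l10 xl).
  set u := x' / x ^+ (Q ^ i).
  have ux : x' = u * x ^+ (Q ^ i) by rewrite divfK.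
  have uy : u * y' = y ^+ (Q ^ i).
    by apply: (mulfI x0); rewrite mulrA (mulrC (x ^+ _) u) -ux Ei.
  have pQ l (w : L) : w ^+ l = 1 -> (w ^+ (Q ^ i)) ^+ l = 1.
    by move=> wl; rewrite -exprM mulnC exprM wl expr1n.
  have u1 : u = 1.
    apply: (unity1 l10 _ _ cl12).
      by rewrite /u expr_div_n x'l pQ // div1r invr1.
    have : (u * y') ^+ l2 = 1 by rewrite uy pQ.
    by rewrite exprMn y'l mulr1.
  rewrite u1 mul1r in ux; rewrite u1 mul1r in uy.
  have e1 : c1 = d1 by apply: share_root mf1 mg1 irf1 irg1 _ rg1; rewrite -/x' ux; apply: root_Qi.
  have e2 : c2 = d2 by apply: share_root mf2 mg2 irf2 irg2 _ rg2; rewrite -/y' uy; apply: root_Qi.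
  by rewrite e1 e2.
move=> h; apply/idP/allpairsP.
  move=> hO; have [mh irh] := Omi _ hO.
  have [_ hd] := (mem_Omega _ _ N0).1 hO.
  have rz : root h^i (rt h^i) by apply: rt_root; rewrite size_map_poly irh.1.
  have zN := rootXn hd rz.
  have [x [y [xl yl zE]]] := decomp zN.
  have [f1 [mf1 irf1 fd1 rf1]] := irr_root l10 xl.
  have [f2 [mf2 irf2 fd2 rf2]] := irr_root l20 yl.
  have f1O : f1 \in O1 by apply/(mem_Omega _ _ l10); split => //; exact: H1.
  have f2O : f2 \in O2 by apply/(mem_Omega _ _ l20); split => //; exact: H2.
  exists (f1, f2); split => //=.
  have [_ _ _ rx' x'l] := Om_rt l10 f1O.
  have [_ _ _ ry' y'l] := Om_rt l20 f2O.
  have [i Ei] := orbit_mem mf1 irf1 rf1 l10 xl cQ1 rx'.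
  have [j Ej] := orbit_mem mf2 irf2 rf2 l20 yl cQ2 ry'.
  have [k0 [xk yk]] := crt_frob i j xl yl.
  have [hO' rh'] := mNP _ (unityN x'l y'l).
  have [mh' irh'] := Omi _ hO'.
  apply: share_root mh mh' irh irh' _ rh'.
  by rewrite Ei Ej -xk -yk -exprMn -zE root_Qi.
move=> [[f1 f2] [/= f1O f2O ->]].
have [_ _ _ _ xl] := Om_rt l10 f1O.
have [_ _ _ _ yl] := Om_rt l20 f2O.
exact: (mNP _ (unityN xl yl)).1.
Qed.

End S.

Theorem corollary2p13 (F : finFieldType) (q l1 l2 : nat) :
  (exists p k : nat, [/\ prime p, (0 < k)%N & q = (p ^ k)%N]) ->
  #|F| = (q ^ 2)%N ->
  prime l1 -> odd l1 -> prime l2 -> odd l2 -> l1 <> l2 ->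
  coprime l1 q -> coprime l2 q ->
  (forall f : {poly F}, f \is monic -> irreducible_poly f ->
      f %| 'X^l1 - 1 -> SCRIM q f) ->
  (forall f : {poly F}, f \is monic -> irreducible_poly f ->
      f %| 'X^l2 - 1 -> SCRIM q f) ->
  coprime (ordmod l1 (q ^ 2)) (ordmod l2 (q ^ 2)) ->
  size (Omega F q (l1 * l2)) = (size (Omega F q l1) * size (Omega F q l2))%N.
Proof.
move=> [p [k [pp k0 qE]]] cardF pl1 _ pl2 _ l12 c1 c2 H1 H2 co.
have [L [io _]] := countable_algebraic_closure F.
have cardF' : #|F| = (p ^ (k * 2))%N by rewrite cardF qE expnM.
have chF : p \in [pchar F] := card_finPcharP cardF' pp.
have cl12 : coprime l1 l2.
  by rewrite prime_coprime // dvdn_prime2 //; apply/eqP.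
have cQ1 : coprime #|F| l1 by rewrite coprime_sym cardF coprimeXr.
have cQ2 : coprime #|F| l2 by rewrite coprime_sym cardF coprimeXr.
rewrite -cardF in co.
subst q.
exact: (@count_main F L io p (k * 2) chF cardF' k erefl l1 l2 pl1 pl2 cl12 cQ1 cQ2 co H1 H2).
Qed.
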